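(* Let $\bar{w}$ be a nice sequence. Then: (1) $(x\;\bar{w}) \in \mathcal{N}$ for every $\lambda$-variable $x$. (2) If $u \in \mathcal{N}$ and $(t[x:=u]\;\bar{w}) \in \mathcal{N}$, then $((\lambda x.t\;u)\;\bar{w}) \in \mathcal{N}$. (3) If $t_1,t_2 \in \mathcal{N}$ and $(t_i\;\bar{w}) \in \mathcal{N}$ (for $i\in\{1,2\}$), then $((\langle t_1,t_2\rangle\;\pi_i)\;\bar{w}) \in \mathcal{N}$. (4) If $t,u_1,u_2 \in \mathcal{N}$ and $u_i[x_i:=t] \in \mathcal{N}$ (for $i\in\{1,2\}$), then $(\omega_i t\;[x_1.u_1,x_2.u_2]) \in \mathcal{N}$. (5) If $t[a:=^*\bar{w}] \in \mathcal{N}$, then $(\mu a.t\;\bar{w}) \in \mathcal{N}$.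
   Context: With disjoint sets of $\lambda$-variables $x,y,\dots$ and $\mu$-variables $a,b,\dots$, terms and $\mathcal{E}$-terms are $\mathcal{T} ::= x \mid \lambda x.\mathcal{T} \mid (\mathcal{T}\;\mathcal{E}) \mid \langle \mathcal{T},\mathcal{T}\rangle \mid \omega_1\mathcal{T} \mid \omega_2\mathcal{T} \mid \mu a.\mathcal{T} \mid (a\;\mathcal{T})$, $\mathcal{E} ::= \mathcal{T} \mid \pi_1 \mid \pi_2 \mid [x.\mathcal{T}, y.\mathcal{T}]$ (up to renaming of bound variables). The one-step reduction $\triangleright$ is the closure under all constructors of: $(\lambda x.u\;v)\triangleright u[x:=v]$; $(\langle t_1,t_2\rangle\;\pi_i)\triangleright t_i$; $(\omega_i t\;[x_1.u_1,x_2.u_2])\triangleright u_i[x_i:=t]$; $((t\;[x_1.u_1,x_2.u_2])\;\varepsilon)\triangleright(t\;[x_1.(u_1\;\varepsilon),x_2.(u_2\;\varepsilon)])$; $(\mu a.t\;\varepsilon)\triangleright\mu a.t[a:=^*\varepsilon]$, where $t[a:=^*\varepsilon]$ replaces inductively each subterm $(a\;v)$ by $(a\;(v\;\varepsilon))$. $\mathcal{N}$ (resp. $\mathcal{N}'$) is the set of strongly normalizable terms (resp. $\mathcal{E}$-terms), i.e. those admitting no infinite $\triangleright$-reduction sequence. For a finite sequence $\bar{w}=w_1\dots w_n$ of $\mathcal{E}$-terms and a term $t$: $(t\;\bar{w})$ is $t$ if $n=0$ and $((t\;w_1)\;w_2\dots w_n)$ otherwise; $t[a:=^*\bar{w}]$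 is obtained from $t$ by replacing inductively each subterm $(a\;v)$ by $(a\;(v\;\bar{w}))$. A finite sequence $\bar{w}=w_1\dots w_n$ of elements of $\mathcal{N}'$ is a nice sequence iff none of $w_1,\dots,w_{n-1}$ is of the form $[x.u,y.v]$ (only $w_n$ may be). *)

(* Defs.v *)
(* Lambda-mu calculus with pairs and sums, de Bruijn indices.
   lambda-variables and mu-variables live in two separate index spaces. *)
From Stdlib Require Import List Arith.
Import ListNotations.

Inductive term : Type :=
| Var  : nat -> term
| Lam  : term -> term
| App  : term -> eterm -> term
| Pair : term -> term -> term
| Inj1 : term -> term
| Inj2 : term -> term
| Mu   : term -> term                (* binds mu-index 0 *)
| MApp : nat -> term -> term         (* (a t), a a mu-variable index *)
with eterm : Type :=
| ETerm : term -> eterm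
| Proj1 : eterm
| Proj2 : eterm
| Case  : term -> term -> eterm.     (* [x.u1, y.u2]; each branch binds lambda-index 0 *)

Fixpoint lift_l (c : nat) (t : term) : term :=
  match t with
  | Var n => if c <=? n then Var (S n) else Var n
  | Lam t => Lam (lift_l (S c) t)
  | App t e => App (lift_l c t) (lift_le c e)
  | Pair t1 t2 => Pair (lift_l c t1) (lift_l c t2)
  | Inj1 t => Inj1 (lift_l c t)
  | Inj2 t => Inj2 (lift_l c t)
  | Mu t => Mu (lift_l c t)
  | MApp a t => MApp a (lift_l c t)
  end
with lift_le (c : nat) (e : eterm) : eterm :=
  match e with
  | ETerm t => ETerm (lift_l c t)
  | Proj1 => Proj1
  | Proj2 => Proj2
  | Case u1 u2 => Case (lift_l (S c) u1) (lift_l (S c) u2)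
  end.

Fixpoint lift_m (c : nat) (t : term) : term :=
  match t with
  | Var n => Var n
  | Lam t => Lam (lift_m c t)
  | App t e => App (lift_m c t) (lift_me c e)
  | Pair t1 t2 => Pair (lift_m c t1) (lift_m c t2)
  | Inj1 t => Inj1 (lift_m c t)
  | Inj2 t => Inj2 (lift_m c t)
  | Mu t => Mu (lift_m (S c) t)
  | MApp a t => MApp (if c <=? a then S a else a) (lift_m c t)
  end
with lift_me (c : nat) (e : eterm) : eterm :=
  match e with
  | ETerm t => ETerm (lift_m c t)
  | Proj1 => Proj1
  | Proj2 => Proj2
  | Case u1 u2 => Case (lift_m c u1) (lift_m c u2)
  end.

(* t[k := u] : capture-avoiding substitution of u for lambda-index k,
   removing the binder (indices above k decrease by one) *)
Fixpoint subst_l (k : nat) (u : term) (t : term) : term :=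
  match t with
  | Var n => if n =? k then u else if k <? n then Var (pred n) else Var n
  | Lam t => Lam (subst_l (S k) (lift_l 0 u) t)
  | App t e => App (subst_l k u t) (subst_le k u e)
  | Pair t1 t2 => Pair (subst_l k u t1) (subst_l k u t2)
  | Inj1 t => Inj1 (subst_l k u t)
  | Inj2 t => Inj2 (subst_l k u t)
  | Mu t => Mu (subst_l k (lift_m 0 u) t)
  | MApp a t => MApp a (subst_l k u t)
  end
with subst_le (k : nat) (u : term) (e : eterm) : eterm :=
  match e with
  | ETerm t => ETerm (subst_l k u t)
  | Proj1 => Proj1
  | Proj2 => Proj2
  | Case u1 u2 => Case (subst_l (S k) (lift_l 0 u) u1) (subst_l (S k) (lift_l 0 u) u2)
  end.

Definition apps (t : term) (ws : list eterm) : term := fold_left App ws t.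

(* t[a :=* ws] : replace inductively every subterm (a v) by (a (v ws)),
   where a is mu-index k; the mu-variable a stays (it is not removed). *)
Fixpoint msubst (k : nat) (ws : list eterm) (t : term) : term :=
  match t with
  | Var n => Var n
  | Lam t => Lam (msubst k (map (lift_le 0) ws) t)
  | App t e => App (msubst k ws t) (msubst_e k ws e)
  | Pair t1 t2 => Pair (msubst k ws t1) (msubst k ws t2)
  | Inj1 t => Inj1 (msubst k ws t)
  | Inj2 t => Inj2 (msubst k ws t)
  | Mu t => Mu (msubst (S k) (map (lift_me 0) ws) t)
  | MApp a t => if a =? k then MApp a (apps (msubst k ws t) ws)
                else MApp a (msubst k ws t)
  end
with msubst_e (k : nat) (ws : list eterm) (e : eterm) : eterm :=
  match e with
  | ETerm t => ETerm (msubst k ws t)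
  | Proj1 => Proj1
  | Proj2 => Proj2
  | Case u1 u2 => Case (msubst k (map (lift_le 0) ws) u1) (msubst k (map (lift_le 0) ws) u2)
  end.

Inductive red : term -> term -> Prop :=
| r_beta  : forall u v, red (App (Lam u) (ETerm v)) (subst_l 0 v u)
| r_pi1   : forall t1 t2, red (App (Pair t1 t2) Proj1) t1
| r_pi2   : forall t1 t2, red (App (Pair t1 t2) Proj2) t2
| r_case1 : forall t u1 u2, red (App (Inj1 t) (Case u1 u2)) (subst_l 0 t u1)
| r_case2 : forall t u1 u2, red (App (Inj2 t) (Case u1 u2)) (subst_l 0 t u2)
| r_comm  : forall t u1 u2 e,
    red (App (App t (Case u1 u2)) e)
        (App t (Case (App u1 (lift_le 0 e)) (App u2 (lift_le 0 e))))
| r_mu    : forall t e, red (App (Mu t) e) (Mu (msubst 0 [lift_me 0 e] t))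
| c_lam   : forall t t', red t t' -> red (Lam t) (Lam t')
| c_appl  : forall t t' e, red t t' -> red (App t e) (App t' e)
| c_appr  : forall t e e', rede e e' -> red (App t e) (App t e')
| c_pairl : forall t1 t1' t2, red t1 t1' -> red (Pair t1 t2) (Pair t1' t2)
| c_pairr : forall t1 t2 t2', red t2 t2' -> red (Pair t1 t2) (Pair t1 t2')
| c_inj1  : forall t t', red t t' -> red (Inj1 t) (Inj1 t')
| c_inj2  : forall t t', red t t' -> red (Inj2 t) (Inj2 t')
| c_mu    : forall t t', red t t' -> red (Mu t) (Mu t')
| c_mapp  : forall a t t', red t t' -> red (MApp a t) (MApp a t')
with rede : eterm -> eterm -> Prop :=
| c_eterm : forall t t', red t t' -> rede (ETerm t) (ETerm t')
| c_casel : forall u1 u1' u2, red u1 u1' -> rede (Case u1 u2) (Case u1' u2)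
| c_caser : forall u1 u2 u2', red u2 u2' -> rede (Case u1 u2) (Case u1 u2').

Definition SN (t : term) : Prop := Acc (fun u v => red v u) t.
Definition SN' (e : eterm) : Prop := Acc (fun u v => rede v u) e.

Definition is_case (e : eterm) : bool :=
  match e with Case _ _ => true | _ => false end.

Definition nice (ws : list eterm) : Prop :=
  Forall SN' ws /\
  (forall i, S i < length ws -> is_case (nth i ws Proj1) = false).

(* i = true stands for index 1, i = false for index 2 *)
Definition proj (i : bool) : eterm := if i then Proj1 else Proj2.
Definition inj (i : bool) (t : term) : term := if i then Inj1 t else Inj2 t.
Definition pick {A} (i : bool) (a1 a2 : A) : A := if i then a1 else a2.

(* Main.v *)
Require Import Defs.
From Stdlib Require Import List Arith Lia Wf_nat.
Import ListNotations.

Scheme term_ind2 := Induction for term Sort Prop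
with eterm_ind2 := Induction for eterm Sort Prop.
Combined Scheme term_eterm_ind from term_ind2, eterm_ind2.

Ltac dcomp := repeat (cbn -[Nat.leb Nat.eqb Nat.ltb]; match goal with
 | |- context [?a <=? ?b] => destruct (Nat.leb_spec a b)
 | |- context [?a =? ?b] => destruct (Nat.eqb_spec a b)
 | |- context [?a <? ?b] => destruct (Nat.ltb_spec a b)
 end).

Ltac ap X := first [apply X; lia | symmetry; apply X; lia | apply X | symmetry; apply X].
Ltac fin := cbn -[Nat.leb Nat.eqb Nat.ltb]; dcomp; try reflexivity; try (exfalso; lia); try (f_equal; lia).

Lemma L1 : (forall t c d, c <= d -> lift_l (S d) (lift_l c t) = lift_l c (lift_l d t))
 /\ (forall e c d, c <= d -> lift_le (S d) (lift_le c e) = lift_le c (lift_le d e)).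
Proof.
  apply term_eterm_ind; intros; cbn -[Nat.leb Nat.eqb Nat.ltb]; try fin;
  f_equal; try (apply H; lia); try (apply H0; lia).
Qed.

Lemma L2 : (forall t c d, c <= d -> lift_m (S d) (lift_m c t) = lift_m c (lift_m d t))
 /\ (forall e c d, c <= d -> lift_me (S d) (lift_me c e) = lift_me c (lift_me d e)).
Proof.
  apply term_eterm_ind; intros; cbn -[Nat.leb Nat.eqb Nat.ltb]; try fin;
  f_equal; try (apply H; lia); try (apply H0; lia); fin.
Qed.

Lemma L3 : (forall t c d, lift_l c (lift_m d t) = lift_m d (lift_l c t))
 /\ (forall e c d, lift_le c (lift_me d e) = lift_me d (lift_le c e)).
Proof.
  apply term_eterm_ind; intros; cbn -[Nat.leb Nat.eqb Nat.ltb]; try fin; f_equal; auto.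
Qed.

Lemma L4 : (forall t j v, subst_l j v (lift_l j t) = t)
 /\ (forall e j v, subst_le j v (lift_le j e) = e).
Proof.
  apply term_eterm_ind; intros; cbn -[Nat.leb Nat.eqb Nat.ltb]; try fin; f_equal; auto.
Qed.

Lemma L5a : (forall t c j v, c <= j -> lift_l c (subst_l j v t) = subst_l (S j) (lift_l c v) (lift_l c t))
 /\ (forall e c j v, c <= j -> lift_le c (subst_le j v e) = subst_le (S j) (lift_l c v) (lift_le c e)).
Proof.
  apply term_eterm_ind; intros; cbn -[Nat.leb Nat.eqb Nat.ltb]; try (f_equal; auto; fail).
  - fin; destruct n; fin.
  - f_equal. rewrite H by lia. f_equal. ap (proj1 L1).
  - f_equal. rewrite H by lia. f_equal. ap (proj1 L3).
  - f_equal; [rewrite H by lia|rewrite H0 by lia]; f_equal; ap (proj1 L1).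
Qed.

Lemma L5b : (forall t c j v, j <= c -> lift_l c (subst_l j v t) = subst_l j (lift_l c v) (lift_l (S c) t))
 /\ (forall e c j v, j <= c -> lift_le c (subst_le j v e) = subst_le j (lift_l c v) (lift_le (S c) e)).
Proof.
  apply term_eterm_ind; intros; cbn -[Nat.leb Nat.eqb Nat.ltb]; try (f_equal; auto; fail).
  - fin; destruct n; fin.
  - f_equal. rewrite H by lia. f_equal. ap (proj1 L1).
  - f_equal. rewrite H by lia. f_equal. ap (proj1 L3).
  - f_equal; [rewrite H by lia|rewrite H0 by lia]; f_equal; ap (proj1 L1).
Qed.

Lemma L6 : (forall t c j v, lift_m c (subst_l j v t) = subst_l j (lift_m c v) (lift_m c t))
 /\ (forall e c j v, lift_me c (subst_le j v e) = subst_le j (lift_m c v) (lift_me c e)).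
Proof.
  apply term_eterm_ind; intros; cbn -[Nat.leb Nat.eqb Nat.ltb]; try (f_equal; auto; fail).
  - fin.
  - f_equal. rewrite H. f_equal. ap (proj1 L3).
  - f_equal. rewrite H. f_equal. ap (proj1 L2).
  - f_equal; [rewrite H|rewrite H0]; f_equal; ap (proj1 L3).
Qed.

Lemma L7 : (forall w i j u v, j <= i ->
   subst_l i u (subst_l j v w) = subst_l j (subst_l i u v) (subst_l (S i) (lift_l j u) w))
 /\ (forall e i j u v, j <= i ->
   subst_le i u (subst_le j v e) = subst_le j (subst_l i u v) (subst_le (S i) (lift_l j u) e)).
Proof.
  apply term_eterm_ind; intros; cbn -[Nat.leb Nat.eqb Nat.ltb]; try (f_equal; auto; fail).
  - fin. all: try (subst; rewrite (proj1 L4); reflexivity).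
  - f_equal. rewrite H by lia. f_equal.
    + ap (proj1 L5a).
    + f_equal. ap (proj1 L1).
  - f_equal. rewrite H by lia. f_equal.
    + ap (proj1 L6).
    + f_equal. ap (proj1 L3).
  - f_equal; [rewrite H by lia|rewrite H0 by lia]; f_equal;
    try (ap (proj1 L5a)); f_equal; ap (proj1 L1).
Qed.

Ltac neqb := repeat match goal with |- context [?a =? ?b] => (replace (a =? b) with false by (symmetry; apply Nat.eqb_neq; lia)) || (replace (a =? b) with true by (symmetry; apply Nat.eqb_eq; lia)) end.
Ltac mapeq L := rewrite ?map_map; apply map_ext; intro; ap (proj2 L).

Lemma lift_l_apps : forall W x c, lift_l c (apps x W) = apps (lift_l c x) (map (lift_le c) W).
Proof. induction W; intros; simpl; auto; try (rewrite IHW; reflexivity). Qed.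
Lemma lift_m_apps : forall W x c, lift_m c (apps x W) = apps (lift_m c x) (map (lift_me c) W).
Proof. induction W; intros; simpl; auto; try (rewrite IHW; reflexivity). Qed.
Lemma subst_apps : forall W x j v, subst_l j v (apps x W) = apps (subst_l j v x) (map (subst_le j v) W).
Proof. induction W; intros; simpl; auto; try (rewrite IHW; reflexivity). Qed.
Lemma msubst_apps : forall W x k B, msubst k B (apps x W) = apps (msubst k B x) (map (msubst_e k B) W).
Proof. induction W; intros; simpl; auto; try (rewrite IHW; reflexivity). Qed.
Lemma apps_app : forall A B x, apps (apps x A) B = apps x (A ++ B).
Proof. intros; unfold apps; rewrite fold_left_app; reflexivity. Qed.

Lemma L8 : (forall t c k W, lift_l c (msubst k W t) = msubst k (map (lift_le c) W) (lift_l c t))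
 /\ (forall e c k W, lift_le c (msubst_e k W e) = msubst_e k (map (lift_le c) W) (lift_le c e)).
Proof.
  apply term_eterm_ind; intros; cbn -[Nat.leb Nat.eqb Nat.ltb]; try (f_equal; auto; fail).
  - fin.
  - f_equal. rewrite H. f_equal. mapeq L1.
  - f_equal. rewrite H. f_equal. mapeq L3.
  - destruct (n =? k); simpl; f_equal; rewrite ?lift_l_apps, H; auto.
  - f_equal; [rewrite H|rewrite H0]; f_equal; mapeq L1.
Qed.

Definition sh (c k : nat) := if c <=? k then S k else k.

Lemma L9 : (forall t c k W, lift_m c (msubst k W t) = msubst (sh c k) (map (lift_me c) W) (lift_m c t))
 /\ (forall e c k W, lift_me c (msubst_e k W e) = msubst_e (sh c k) (map (lift_me c) W) (lift_me c e)).
Proof.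
  apply term_eterm_ind; intros; cbn -[Nat.leb Nat.eqb Nat.ltb]; try (f_equal; auto; fail).
  - f_equal. rewrite H. f_equal. mapeq L3.
  - f_equal. rewrite H. replace (sh (S c) (S k)) with (S (sh c k)) by (unfold sh; simpl; destruct (c <=? k); reflexivity). f_equal. mapeq L2.
  - destruct (Nat.eqb_spec n k); cbn -[Nat.leb Nat.eqb Nat.ltb]; rewrite ?lift_m_apps, H; unfold sh; fin.
  - f_equal; [rewrite H|rewrite H0]; f_equal; mapeq L3.
Qed.

Lemma L10 : (forall t j B, msubst j B (lift_m j t) = lift_m j t)
 /\ (forall e j B, msubst_e j B (lift_me j e) = lift_me j e).
Proof.
  apply term_eterm_ind; intros; cbn -[Nat.leb Nat.eqb Nat.ltb]; try (f_equal; auto; fail).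
  fin; f_equal; auto.
Qed.

Lemma map_L10 : forall A0 j B, map (msubst_e j B) (map (lift_me j) A0) = map (lift_me j) A0.
Proof. intros; rewrite map_map; apply map_ext; intro; apply (proj2 L10). Qed.

Lemma L11 : (forall t j k A0 B, j <= k ->
   msubst (S k) (map (lift_me j) A0) (msubst j B t) =
   msubst j (map (msubst_e (S k) (map (lift_me j) A0)) B) (msubst (S k) (map (lift_me j) A0) t))
 /\ (forall e j k A0 B, j <= k ->
   msubst_e (S k) (map (lift_me j) A0) (msubst_e j B e) =
   msubst_e j (map (msubst_e (S k) (map (lift_me j) A0)) B) (msubst_e (S k) (map (lift_me j) A0) e)).
Proof.
  apply term_eterm_ind; intros; cbn -[Nat.leb Nat.eqb Nat.ltb]; try (f_equal; auto; fail).
  - f_equal.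
    replace (map (lift_le 0) (map (lift_me j) A0)) with (map (lift_me j) (map (lift_le 0) A0)) by mapeq L3.
    rewrite H by lia. f_equal. rewrite !map_map. apply map_ext; intro.
    rewrite (proj2 L8). f_equal. mapeq L3.
  - f_equal.
    replace (map (lift_me 0) (map (lift_me j) A0)) with (map (lift_me (S j)) (map (lift_me 0) A0)) by mapeq L2.
    rewrite H by lia. f_equal. rewrite !map_map. apply map_ext; intro.
    rewrite (proj2 L9). unfold sh; simpl. f_equal. mapeq L2.
  - destruct (Nat.eqb_spec n j).
    + subst. replace (j =? S k) with false by (symmetry; apply Nat.eqb_neq; lia).
      cbn -[Nat.leb Nat.eqb Nat.ltb]. neqb. rewrite msubst_apps, H by lia. reflexivity.
    + destruct (Nat.eqb_spec n (S k)).
      * subst. cbn -[Nat.leb Nat.eqb Nat.ltb]. neqb.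
        rewrite msubst_apps, map_L10, H by lia. reflexivity.
      * cbn -[Nat.leb Nat.eqb Nat.ltb]. neqb.
        rewrite H by lia. reflexivity.
  - replace (map (lift_le 0) (map (lift_me j) A0)) with (map (lift_me j) (map (lift_le 0) A0)) by mapeq L3.
    f_equal; (rewrite H by lia) || (rewrite H0 by lia); f_equal; rewrite !map_map; apply map_ext; intro;
    rewrite (proj2 L8); f_equal; mapeq L3.
Qed.

Lemma L12 : (forall t j A0 B, msubst j B (msubst j (map (lift_me j) A0) t) = msubst j (map (lift_me j) A0 ++ B) t)
 /\ (forall e j A0 B, msubst_e j B (msubst_e j (map (lift_me j) A0) e) = msubst_e j (map (lift_me j) A0 ++ B) e).
Proof.
  apply term_eterm_ind; intros; cbn -[Nat.leb Nat.eqb Nat.ltb]; try (f_equal; auto; fail).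
  - f_equal.
    replace (map (lift_le 0) (map (lift_me j) A0)) with (map (lift_me j) (map (lift_le 0) A0)) by mapeq L3.
    rewrite H, map_app. f_equal. f_equal. mapeq L3.
  - f_equal.
    replace (map (lift_me 0) (map (lift_me j) A0)) with (map (lift_me (S j)) (map (lift_me 0) A0)) by mapeq L2.
    rewrite H, map_app. f_equal. f_equal. mapeq L2.
  - destruct (Nat.eqb_spec n j).
    + subst. cbn -[Nat.leb Nat.eqb Nat.ltb]. rewrite Nat.eqb_refl, msubst_apps, map_L10, H, apps_app.
      reflexivity.
    + cbn -[Nat.leb Nat.eqb Nat.ltb].
      replace (n =? j) with false by (symmetry; apply Nat.eqb_neq; lia). rewrite H; reflexivity.
  - replace (map (lift_le 0) (map (lift_me j) A0)) with (map (lift_me j) (map (lift_le 0) A0)) by mapeq L3.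
    rewrite H, H0, map_app. f_equal; f_equal; f_equal; mapeq L3.
Qed.

Lemma map_L4 : forall W j v, map (subst_le j v) (map (lift_le j) W) = W.
Proof. intros; rewrite map_map. rewrite <- (map_id W) at 2. apply map_ext; intro; apply (proj2 L4). Qed.

Lemma L13 : (forall u k j v W, msubst k W (subst_l j v u) = subst_l j (msubst k W v) (msubst k (map (lift_le j) W) u))
 /\ (forall e k j v W, msubst_e k W (subst_le j v e) = subst_le j (msubst k W v) (msubst_e k (map (lift_le j) W) e)).
Proof.
  apply term_eterm_ind; intros; cbn -[Nat.leb Nat.eqb Nat.ltb]; try (f_equal; auto; fail).
  - fin.
  - f_equal. rewrite H. f_equal.
    + ap (proj1 L8).
    + f_equal. mapeq L1.
  - f_equal. rewrite H. f_equal.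
    + ap (proj1 L9).
    + f_equal. mapeq L3.
  - destruct (Nat.eqb_spec n k); cbn -[Nat.leb Nat.eqb Nat.ltb].
    + rewrite subst_apps, map_L4, H. reflexivity.
    + rewrite H. reflexivity.
  - f_equal; (rewrite H || rewrite H0); f_equal; try ap (proj1 L8); f_equal; mapeq L1.
Qed.

Lemma L14 : (forall t j v0 k W, subst_l j (lift_m k v0) (msubst k W t) = msubst k (map (subst_le j (lift_m k v0)) W) (subst_l j (lift_m k v0) t))
 /\ (forall e j v0 k W, subst_le j (lift_m k v0) (msubst_e k W e) = msubst_e k (map (subst_le j (lift_m k v0)) W) (subst_le j (lift_m k v0) e)).
Proof.
  apply term_eterm_ind; intros; cbn -[Nat.leb Nat.eqb Nat.ltb]; try (f_equal; auto; fail).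
  - fin. subst. symmetry; apply (proj1 L10).
  - f_equal. rewrite (proj1 L3), H. f_equal. rewrite !map_map; apply map_ext; intro.
    rewrite (proj2 L5a) by lia. f_equal. ap (proj1 L3).
  - f_equal. replace (lift_m 0 (lift_m k v0)) with (lift_m (S k) (lift_m 0 v0)) by ap (proj1 L2).
    rewrite H. f_equal. rewrite !map_map; apply map_ext; intro.
    rewrite (proj2 L6). f_equal. ap (proj1 L2).
  - destruct (Nat.eqb_spec n k); cbn -[Nat.leb Nat.eqb Nat.ltb].
    + rewrite subst_apps, H. reflexivity.
    + rewrite H. reflexivity.
  - f_equal; rewrite (proj1 L3); (rewrite H || rewrite H0); f_equal; rewrite !map_map; apply map_ext; intro;
    rewrite (proj2 L5a) by lia; f_equal; ap (proj1 L3).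
Qed.

Scheme red_ind2 := Induction for red Sort Prop
with rede_ind2 := Induction for rede Sort Prop.
Combined Scheme red_rede_ind from red_ind2, rede_ind2.

Inductive rt {A} (R : A -> A -> Prop) : A -> A -> Prop :=
| rt_refl : forall a, rt R a a
| rt_step : forall a b c, R a b -> rt R b c -> rt R a c.

Lemma rt_one {A} (R : A -> A -> Prop) a b : R a b -> rt R a b.
Proof. intros; eapply rt_step; eauto; constructor. Qed.
Lemma rt_trans' {A} (R : A -> A -> Prop) a b c : rt R a b -> rt R b c -> rt R a c.
Proof. induction 1; intros; auto. eapply rt_step; eauto. Qed.
Lemma rt_map {A B} (R : A -> A -> Prop) (R' : B -> B -> Prop) (f : A -> B) :
  (forall x y, R x y -> R' (f x) (f y)) -> forall a b, rt R a b -> rt R' (f a) (f b).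
Proof. intros Hf a b H; induction H; [constructor | eapply rt_step; eauto]. Qed.

Inductive lstep : list eterm -> list eterm -> Prop :=
| ls_here : forall w w' l, rede w w' -> lstep (w :: l) (w' :: l)
| ls_there : forall w l l', lstep l l' -> lstep (w :: l) (w :: l').

Lemma apps_red : forall W x y, red x y -> red (apps x W) (apps y W).
Proof. induction W; intros; simpl; auto. apply IHW. constructor; auto. Qed.
Lemma apps_lstep : forall W W' x, lstep W W' -> red (apps x W) (apps x W').
Proof.
  intros W W' x H; revert x; induction H; intros; simpl.
  - apply apps_red. apply c_appr; auto.
  - apply IHlstep.
Qed.
Lemma lstep_map : forall f, (forall e e', rede e e' -> rede (f e) (f e')) ->
  forall W W', lstep W W' -> lstep (map f W) (map f W').
Proof. intros f Hf W W' H; induction H; simpl; constructor; auto. Qed.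

Lemma R1 : (forall t t', red t t' -> forall c, red (lift_l c t) (lift_l c t'))
 /\ (forall e e', rede e e' -> forall c, rede (lift_le c e) (lift_le c e')).
Proof.
  apply red_rede_ind; intros; simpl; try (constructor; auto; fail).
  - rewrite (proj1 L5b) by lia. constructor.
  - rewrite (proj1 L5b) by lia. constructor.
  - rewrite (proj1 L5b) by lia. constructor.
  - rewrite (proj2 L1) by lia. constructor.
  - rewrite (proj1 L8). simpl. rewrite (proj2 L3). constructor.
Qed.

Lemma R2 : (forall t t', red t t' -> forall c, red (lift_m c t) (lift_m c t'))
 /\ (forall e e', rede e e' -> forall c, rede (lift_me c e) (lift_me c e')).
Proof.
  apply red_rede_ind; intros; simpl; try (constructor; auto; fail).
  - rewrite (proj1 L6). constructor.
  - rewrite (proj1 L6). constructor.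
  - rewrite (proj1 L6). constructor.
  - rewrite <- (proj2 L3). constructor.
  - rewrite (proj1 L9). simpl. unfold sh; simpl. rewrite (proj2 L2) by lia. constructor.
Qed.

Lemma R3 : (forall t t', red t t' -> forall j v, red (subst_l j v t) (subst_l j v t'))
 /\ (forall e e', rede e e' -> forall j v, rede (subst_le j v e) (subst_le j v e')).
Proof.
  apply red_rede_ind; intros; simpl; try (constructor; auto; fail).
  - rewrite (proj1 L7) by lia. constructor.
  - rewrite (proj1 L7) by lia. constructor.
  - rewrite (proj1 L7) by lia. constructor.
  - rewrite <- (proj2 L5a) by lia. constructor.
  - rewrite (proj1 L14). simpl. rewrite <- (proj2 L6). constructor.
Qed.

Definition star := rt red.
Definition stare := rt rede.

Lemma R4 : (forall t j v v', red v v' -> star (subst_l j v t) (subst_l j v' t))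
 /\ (forall e j v v', red v v' -> stare (subst_le j v e) (subst_le j v' e)).
Proof.
  unfold star, stare.
  apply term_eterm_ind; intros; cbn -[Nat.leb Nat.eqb Nat.ltb].
  - destruct (n =? j); [apply rt_one; auto | constructor].
  - eapply (rt_map _ _ Lam); [intros ? ? Hxy; constructor; exact Hxy|]. apply H. apply (proj1 R1); auto.
  - eapply rt_trans'.
    + eapply (rt_map _ _ (fun x => App x (subst_le j v e))); [intros ? ? Hxy; constructor; exact Hxy|]. apply H; eauto.
    + eapply (rt_map _ _ (fun x => App (subst_l j v' t) x)); [intros ? ? Hxy; constructor; exact Hxy|]. apply H0; eauto.
  - eapply rt_trans'.
    + eapply (rt_map _ _ (fun x => Pair x (subst_l j v t0))); [intros ? ? Hxy; constructor; exact Hxy|]. apply H; eauto.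
    + eapply (rt_map _ _ (fun x => Pair (subst_l j v' t) x)); [intros ? ? Hxy; constructor; exact Hxy|]. apply H0; eauto.
  - eapply (rt_map _ _ Inj1); [intros ? ? Hxy; constructor; exact Hxy|]. apply H; eauto.
  - eapply (rt_map _ _ Inj2); [intros ? ? Hxy; constructor; exact Hxy|]. apply H; eauto.
  - eapply (rt_map _ _ Mu); [intros ? ? Hxy; constructor; exact Hxy|]. apply H. apply (proj1 R2); auto.
  - eapply (rt_map _ _ (MApp n)); [intros ? ? Hxy; constructor; exact Hxy|]. apply H; eauto.
  - eapply (rt_map _ _ ETerm); [intros ? ? Hxy; constructor; exact Hxy|]. apply H; eauto.
  - constructor.
  - constructor.
  - eapply rt_trans'.
    + eapply (rt_map _ _ (fun x => Case x (subst_l (S j) (lift_l 0 v) t0))); [intros ? ? Hxy; constructor; exact Hxy|].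
      apply H; apply (proj1 R1); eauto.
    + eapply (rt_map _ _ (fun x => Case (subst_l (S j) (lift_l 0 v') t) x)); [intros ? ? Hxy; constructor; exact Hxy|].
      apply H0; apply (proj1 R1); eauto.
Qed.

Lemma R5 : (forall t t', red t t' -> forall k W, red (msubst k W t) (msubst k W t'))
 /\ (forall e e', rede e e' -> forall k W, rede (msubst_e k W e) (msubst_e k W e')).
Proof.
  apply red_rede_ind; intros; cbn -[Nat.leb Nat.eqb Nat.ltb]; try (constructor; auto; fail).
  - rewrite (proj1 L13). constructor.
  - rewrite (proj1 L13). constructor.
  - rewrite (proj1 L13). constructor.
  - rewrite <- (proj2 L8). constructor.
  - rewrite (proj1 L11) by lia. simpl.
    replace (msubst_e (S k) (map (lift_me 0) W) (lift_me 0 e)) with (lift_me 0 (msubst_e k W e)) by (rewrite (proj2 L9); reflexivity).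
    constructor.
  - destruct (a =? k); constructor; auto; apply apps_red; auto.
Qed.

Lemma R6 : (forall t k W W', lstep W W' -> star (msubst k W t) (msubst k W' t))
 /\ (forall e k W W', lstep W W' -> stare (msubst_e k W e) (msubst_e k W' e)).
Proof.
  unfold star, stare.
  apply term_eterm_ind; intros; cbn -[Nat.leb Nat.eqb Nat.ltb].
  - constructor.
  - eapply (rt_map _ _ Lam); [intros ? ? Hxy; constructor; exact Hxy|]. apply H.
    apply lstep_map; auto. intros; apply (proj2 R1); auto.
  - eapply rt_trans'.
    + eapply (rt_map _ _ (fun x => App x (msubst_e k W e))); [intros ? ? Hxy; constructor; exact Hxy|]. apply H; eauto.
    + eapply (rt_map _ _ (fun x => App (msubst k W' t) x)); [intros ? ? Hxy; constructor; exact Hxy|]. apply H0; eauto.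
  - eapply rt_trans'.
    + eapply (rt_map _ _ (fun x => Pair x (msubst k W t0))); [intros ? ? Hxy; constructor; exact Hxy|]. apply H; eauto.
    + eapply (rt_map _ _ (fun x => Pair (msubst k W' t) x)); [intros ? ? Hxy; constructor; exact Hxy|]. apply H0; eauto.
  - eapply (rt_map _ _ Inj1); [intros ? ? Hxy; constructor; exact Hxy|]. apply H; eauto.
  - eapply (rt_map _ _ Inj2); [intros ? ? Hxy; constructor; exact Hxy|]. apply H; eauto.
  - eapply (rt_map _ _ Mu); [intros ? ? Hxy; constructor; exact Hxy|]. apply H.
    apply lstep_map; auto. intros; apply (proj2 R2); auto.
  - destruct (n =? k).
    + eapply (rt_map _ _ (MApp n)); [intros ? ? Hxy; constructor; exact Hxy|].
      eapply rt_trans'.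
      * eapply (rt_map _ _ (fun x => apps x W)); [intros ? ? Hxy; apply apps_red; exact Hxy|]. apply H; eauto.
      * apply rt_one. apply apps_lstep; auto.
    + eapply (rt_map _ _ (MApp n)); [intros ? ? Hxy; constructor; exact Hxy|]. apply H; eauto.
  - eapply (rt_map _ _ ETerm); [intros ? ? Hxy; constructor; exact Hxy|]. apply H; eauto.
  - constructor.
  - constructor.
  - assert (lstep (map (lift_le 0) W) (map (lift_le 0) W')) by
      (apply lstep_map; auto; intros; apply (proj2 R1); auto).
    eapply rt_trans'.
    + eapply (rt_map _ _ (fun x => Case x (msubst k (map (lift_le 0) W) t0))); [intros ? ? Hxy; constructor; exact Hxy|].
      apply H; eauto.
    + eapply (rt_map _ _ (fun x => Case (msubst k (map (lift_le 0) W') t) x)); [intros ? ? Hxy; constructor; exact Hxy|].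
      apply H0; eauto.
Qed.

Inductive root : term -> term -> Prop :=
| ro_beta  : forall u v, root (App (Lam u) (ETerm v)) (subst_l 0 v u)
| ro_pi1   : forall t1 t2, root (App (Pair t1 t2) Proj1) t1
| ro_pi2   : forall t1 t2, root (App (Pair t1 t2) Proj2) t2
| ro_case1 : forall t u1 u2, root (App (Inj1 t) (Case u1 u2)) (subst_l 0 t u1)
| ro_case2 : forall t u1 u2, root (App (Inj2 t) (Case u1 u2)) (subst_l 0 t u2)
| ro_comm  : forall t u1 u2 e,
    root (App (App t (Case u1 u2)) e)
        (App t (Case (App u1 (lift_le 0 e)) (App u2 (lift_le 0 e))))
| ro_mu    : forall t e, root (App (Mu t) e) (Mu (msubst 0 [lift_me 0 e] t)).

Lemma red_app_inv : forall h w x, red (App h w) x ->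
  root (App h w) x \/ (exists h', red h h' /\ x = App h' w) \/ (exists w', rede w w' /\ x = App h w').
Proof.
  intros h w x H; inversion H; subst; try (left; constructor; fail).
  - right; left; eauto.
  - right; right; eauto.
Qed.

Definition prefix_ok (ws : list eterm) :=
  forall i, S i < length ws -> is_case (nth i ws Proj1) = false.

Lemma apps_inv : forall ws h s, prefix_ok ws -> red (apps h ws) s ->
  (exists h', red h h' /\ s = apps h' ws) \/
  (exists ws', lstep ws ws' /\ s = apps h ws') \/
  (exists w rest h', ws = w :: rest /\ root (App h w) h' /\ s = apps h' rest).
Proof.
  induction ws as [|w rest IH]; intros h s Hp Hr.
  - left; exists s; auto.
  - simpl in Hr.
    assert (Hp' : prefix_ok rest).
    { intros i Hi. apply (Hp (S i)). simpl; lia. }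
    destruct (IH _ _ Hp' Hr) as [[h'' [H1 ->]] | [[ws' [H1 ->]] | [w2 [rest2 [h' [-> [H1 ->]]]]]]].
    + destruct (red_app_inv _ _ _ H1) as [Hr1 | [[h0 [H2 ->]] | [w' [H2 ->]]]].
      * right; right. exists w, rest, h''; auto.
      * left. exists h0; split; auto.
      * right; left. exists (w' :: rest); split; [constructor; auto | reflexivity].
    + right; left. exists (w :: ws'); split; [constructor; auto | reflexivity].
    + exfalso. inversion H1; subst.
      specialize (Hp 0). simpl in Hp. discriminate Hp. lia.
Qed.

Lemma SN_step : forall t t', SN t -> red t t' -> SN t'.
Proof. intros t t' H Hr; unfold SN in *; destruct H as [H]; apply H; exact Hr. Qed.
Lemma SN_star : forall t t', SN t -> star t t' -> SN t'.
Proof. intros t t' H Hs; induction Hs; auto. apply IHHs. eapply SN_step; eauto. Qed.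

Lemma rede_case : forall e e', rede e e' -> is_case e = is_case e'.
Proof. intros e e' H; inversion H; reflexivity. Qed.

Lemma lstep_len : forall ws ws', lstep ws ws' -> length ws = length ws'.
Proof. induction 1; simpl; auto. Qed.

Lemma lstep_case : forall ws ws', lstep ws ws' -> forall i, is_case (nth i ws Proj1) = is_case (nth i ws' Proj1).
Proof.
  induction 1; intros [|i]; simpl; auto. apply rede_case; auto.
Qed.

Lemma lstep_Forall : forall ws ws', lstep ws ws' -> Forall SN' ws -> Forall SN' ws'.
Proof.
  induction 1; intros HF; inversion HF; subst; constructor; auto.
  unfold SN' in *; match goal with Ha : Acc _ w |- _ => destruct Ha as [Hacc]; apply Hacc; auto end.
Qed.

Lemma lstep_nice : forall ws ws', lstep ws ws' -> nice ws -> nice ws'.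
Proof.
  intros ws ws' Hl [HF Hc]; split.
  - eapply lstep_Forall; eauto.
  - intros i Hi. rewrite <- (lstep_case _ _ Hl). apply Hc. rewrite (lstep_len _ _ Hl); auto.
Qed.

Lemma nice_tail : forall w rest, nice (w :: rest) -> nice rest.
Proof.
  intros w rest [HF Hc]; split.
  - inversion HF; auto.
  - intros i Hi. apply (Hc (S i)). simpl; lia.
Qed.

Lemma acc_lstep : forall ws, Forall SN' ws -> Acc (fun a b => lstep b a) ws.
Proof.
  induction 1 as [|w l Hw Hl IH].
  - constructor; intros y Hy; inversion Hy.
  - revert l Hl IH. induction Hw as [w _ IHw]. intros l Hl IH.
    induction IH as [l Hacc IHl].
    constructor; intros y Hy. inversion Hy; subst.
    + apply IHw; auto. constructor; auto.
    + apply IHl; auto. eapply lstep_Forall; eauto.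
Qed.

Lemma star_apps : forall ws x y, star x y -> star (apps x ws) (apps y ws).
Proof. intros. eapply (rt_map red red (fun z => apps z ws)); [intros; apply apps_red; auto | auto]. Qed.

Lemma part1 : forall ws, nice ws -> forall x, SN (apps (Var x) ws).
Proof.
  intros ws Hn x. pose proof (acc_lstep ws (proj1 Hn)) as Hacc.
  induction Hacc as [ws _ IH].
  constructor; intros y Hy.
  destruct (apps_inv _ _ _ (proj2 Hn) Hy) as [[h' [H1 ->]] | [[ws' [H1 ->]] | [w [rest [h' [-> [H1 ->]]]]]]].
  - inversion H1.
  - apply IH; auto. eapply lstep_nice; eauto.
  - inversion H1.
Qed.

Lemma part2 : forall u, SN u -> forall s, SN s -> forall t ws, s = apps (subst_l 0 u t) ws -> nice ws ->
  SN (apps (App (Lam t) (ETerm u)) ws).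
Proof.
  intros u Hu. induction Hu as [u Hu IHu].
  intros s Hs. induction Hs as [s Hs IHs]. intros t ws -> Hn.
  constructor; intros y Hy.
  destruct (apps_inv _ _ _ (proj2 Hn) Hy) as [[h' [H1 ->]] | [[ws' [H1 ->]] | [w [rest [h' [-> [H1 ->]]]]]]].
  - inversion H1; subst.
    + constructor; auto.
    + inversion H3; subst. eapply IHs; eauto. apply apps_red. apply (proj1 R3); auto.
    + inversion H3; subst. eapply IHu; eauto.
      eapply SN_star; [constructor; exact Hs|]. apply star_apps. apply (proj1 R4); auto.
  - eapply IHs; eauto. apply apps_lstep; auto. eapply lstep_nice; eauto.
  - inversion H1.
Qed.

Lemma part3 : forall i t1, SN t1 -> forall t2, SN t2 -> forall s, SN s -> forall ws,
  s = apps (pick i t1 t2) ws -> nice ws -> SN (apps (App (Pair t1 t2) (proj i)) ws).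
Proof.
  intros i t1 H1. induction H1 as [t1 H1 IH1].
  intros t2 H2. induction H2 as [t2 H2 IH2].
  intros s Hs. induction Hs as [s Hs IHs]. intros ws -> Hn.
  constructor; intros y Hy.
  destruct (apps_inv _ _ _ (proj2 Hn) Hy) as [[h' [Hr ->]] | [[ws' [Hr ->]] | [w [rest [h' [-> [Hr ->]]]]]]].
  - destruct i; simpl in Hr; inversion Hr; subst; try (constructor; exact Hs);
      match goal with H : rede _ _ |- _ => inversion H | _ => idtac end;
      match goal with H : red (Pair _ _) _ |- _ => inversion H; subst | _ => idtac end.
    all: first [ solve [eapply IH1; eauto; try (constructor; auto; fail); try (apply Hs; apply apps_red; auto; fail); reflexivity]
               | solve [eapply IH2; eauto; try (constructor; auto; fail); try (apply Hs; apply apps_red; auto; fail); reflexivity] ].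
  - eapply IHs; eauto. apply apps_lstep; auto. eapply lstep_nice; eauto.
  - destruct i; inversion Hr.
Qed.

Lemma part4 : forall i t, SN t -> forall u1, SN u1 -> forall u2, SN u2 ->
  SN (subst_l 0 t (pick i u1 u2)) -> SN (App (inj i t) (Case u1 u2)).
Proof.
  intros i t Ht. induction Ht as [t Ht IHt].
  intros u1 H1. induction H1 as [u1 H1 IH1].
  intros u2 H2. induction H2 as [u2 H2 IH2]. intros Hs.
  constructor; intros y Hy.
  destruct i; simpl in *; inversion Hy; subst; auto;
    match goal with H : red (Inj1 _) _ |- _ => inversion H; subst
                  | H : red (Inj2 _) _ |- _ => inversion H; subst
                  | H : rede (Case _ _) _ |- _ => inversion H; subst
                  | _ => idtac end.
  all: first [ solve [eapply IHt; eauto; try (constructor; auto; fail); eapply SN_star; [exact Hs | apply (proj1 R4); auto]]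
   | solve [eapply IH1; eauto; try (constructor; auto; fail); eapply SN_step; [exact Hs | apply (proj1 R3); auto]]
   | solve [eapply IH1; eauto; constructor; auto]
   | solve [eapply IH2; eauto; try (constructor; auto; fail); eapply SN_step; [exact Hs | apply (proj1 R3); auto]]
   | solve [eapply IH2; eauto] ].
Qed.

Lemma part5 : forall n ws, length ws = n -> nice ws ->
  forall t, SN (msubst 0 (map (lift_me 0) ws) t) -> SN (apps (Mu t) ws).
Proof.
  intros n; induction n as [n IHn] using (well_founded_induction lt_wf).
  intros ws Hlen Hn.
  pose proof (acc_lstep ws (proj1 Hn)) as Hacc.
  revert Hlen Hn. induction Hacc as [ws _ IHacc]. intros Hlen Hn t Hs.
  remember (msubst 0 (map (lift_me 0) ws) t) as s eqn:Heq. revert t Heq.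
  induction Hs as [s Hs IHs]. intros t ->.
  constructor; intros y Hy.
  destruct (apps_inv _ _ _ (proj2 Hn) Hy) as [[h' [Hr ->]] | [[ws' [Hr ->]] | [w [rest [h' [-> [Hr ->]]]]]]].
  - inversion Hr; subst. eapply IHs; [|reflexivity]. apply (proj1 R5); auto.
  - apply IHacc; [exact Hr| | |].
    + rewrite <- (lstep_len _ _ Hr); auto.
    + eapply lstep_nice; eauto.
    + eapply SN_star; [constructor; exact Hs|]. apply (proj1 R6).
      apply lstep_map; auto. intros; apply (proj2 R2); auto.
  - inversion Hr; subst. eapply IHn; [|reflexivity| eapply nice_tail; eauto |].
    + simpl; lia.
    + rewrite (proj1 L12 t 0 [w]). simpl. constructor; exact Hs.
Qed.

Theorem lemma3 : forall ws : list eterm, nice ws ->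
  (* (1) *)
  (forall x : nat, SN (apps (Var x) ws)) /\
  (* (2) *)
  (forall t u : term, SN u -> SN (apps (subst_l 0 u t) ws) ->
     SN (apps (App (Lam t) (ETerm u)) ws)) /\
  (* (3) *)
  (forall (i : bool) (t1 t2 : term), SN t1 -> SN t2 -> SN (apps (pick i t1 t2) ws) ->
     SN (apps (App (Pair t1 t2) (proj i)) ws)) /\
  (* (4) *)
  (forall (i : bool) (t u1 u2 : term), SN t -> SN u1 -> SN u2 ->
     SN (subst_l 0 t (pick i u1 u2)) ->
     SN (App (inj i t) (Case u1 u2))) /\
  (* (5) *)
  (forall t : term, SN (msubst 0 (map (lift_me 0) ws) t) ->
     SN (apps (Mu t) ws)).
Proof.
  intros ws Hn; split; [|split; [|split; [|split]]].
  - apply part1; exact Hn.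
  - intros t u Hu Hs; exact (part2 u Hu _ Hs t ws eq_refl Hn).
  - intros i t1 t2 H1 H2 H3; exact (part3 i t1 H1 t2 H2 _ H3 ws eq_refl Hn).
  - intros; apply part4; assumption.
  - intros t Ht; exact (part5 _ ws eq_refl Hn t Ht).
Qed.
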